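(* Let $n\geq 2$, $R_m,k>0$ and $0\leq\alpha\leq 1$. Let $\Omega\subset\mathbb{R}^n$ be a bounded Lipschitz domain of diameter at most $R_m$ whose complement $\mathbb{R}^n\setminus\Omega$ is connected. Then there exists a positive constant $C$, depending only on $k$, $R_m$ and $n$, such that for every $\varphi\in C^\alpha(\overline{\Omega})$ satisfying \[ \frac{\sup_{\partial\Omega}|\varphi|}{\|\varphi\|_{C^\alpha(\overline\Omega)}}\geq C\,\big(\operatorname{diam}(\Omega)\big)^\alpha, \] the source $\chi_\Omega\varphi$ radiates a non-zero far-field pattern at wavenumber $k$.
   Context: Source scattering: for a bounded domain $\Omega\subset\mathbb{R}^n$, a function $\varphi$ on $\overline\Omega$ and a wavenumber $k>0$, let $f=\chi_\Omega\varphi$ and let $u\in H^2_{loc}(\mathbb{R}^n)$ be the unique solution of $(\Delta+k^2)u=f$ in $\mathbb{R}^n$ satisfying the Sommerfeld radiation condition $\lim_{r\to\infty}r^{(n-1)/2}(\partial_r-ik)u=0$, $r=|x|$. Its far-field pattern is $u_\infty(\hat x)=C_{n,k}\int_{\mathbb{R}^n}e^{-ik\hat x\cdot y}f(y)\,dy$, $\hat x\in\mathbb{S}^{n-1}$, where $C_{n,k}=\frac{-i}{\sqrt{8\pi}}\big(\frac{k}{2\pi}\big)^{(n-2)/2}e^{-(n-1)\pi i/4}$; equivalently $u(x)=\frac{e^{ik|x|}}{|x|^{(n-1)/2}}u_\infty(x/|x|)+$ lower order terms as $|x|\to\infty$. The source ''radiates a non-zero far-field pattern'' if $u_\infty\not\equiv0$,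 and is ''radiationless'' if $u_\infty\equiv 0$. $\|\cdot\|_{C^\alpha}$ is the standard Hölder norm. Standing assumption: all bounded domains $\Omega$ considered satisfy $H^2_0(\Omega)=\{u|_\Omega: u\in H^2(\mathbb{R}^n),\ u=0 \text{ in } \mathbb{R}^n\setminus\overline\Omega\}$. *)

(* Defs.v *)
From HB Require Import structures.
From mathcomp Require Import all_boot all_order all_algebra.
From mathcomp Require Import all_classical all_reals all_analysis.
From mathcomp Require Import complex.
Set Implicit Arguments. Unset Strict Implicit. Unset Printing Implicit Defensive.
Import Order.TTheory GRing.Theory Num.Theory.
Import numFieldNormedType.Exports.
Local Open Scope classical_set_scope.
Local Open Scope ring_scope.
Local Open Scope complex_scope.

Section Defs.
Variable R : realType.

Definition dotv (n : nat) (x y : 'rV[R]_n) : R := \sum_(i < n) x 0 i * y 0 i.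
Definition enorm (n : nat) (x : 'rV[R]_n) : R := Num.sqrt (dotv x x).
Definition edist (n : nat) (x y : 'rV[R]_n) : R := enorm (x - y).

Definition diam (n : nat) (A : set 'rV[R]_n) : R :=
  sup [set d | exists x y, A x /\ A y /\ d = edist x y].

Definition boundary (n : nat) (A : set 'rV[R]_n) : set 'rV[R]_n :=
  closure A `\` interior A.

Definition lipschitz_fun (n : nat) (g : 'rV[R]_n -> R) : Prop :=
  exists L : R, forall a b, `|g a - g b| <= L * edist a b.

(* Bounded Lipschitz domain: nonempty bounded connected open set which, near
   every boundary point p, after a rigid change of coordinates (unit normal
   direction nu, hyperplane nu^perp), is the strict epigraph of a Lipschitz
   function inside a cylinder. *)
Definition lipschitz_domain (n : nat) (O : set 'rV[R]_n) : Prop :=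
  [/\ open O, connected O, O !=set0,
      (exists M : R, forall x, O x -> enorm x <= M) &
      forall p, boundary O p ->
        exists (nu : 'rV[R]_n) (g : 'rV[R]_n -> R) (r h : R),
          [/\ enorm nu = 1, lipschitz_fun g, 0 < r, 0 < h &
              forall x : 'rV[R]_n,
                let z := x - p in
                let t := dotv z nu in
                let z' := z - t *: nu in
                enorm z' < r -> `|t| < h -> (O x <-> g z' < t)]].

Definition cnorm (z : R[i]) : R := Num.sqrt (complex.Re z ^+ 2 + complex.Im z ^+ 2).

Definition holder_sup (n : nat) (O : set 'rV[R]_n) (phi : 'rV[R]_n -> R[i]) :=
  [set cnorm (phi x) | x in closure O].

Definition holder_quot (n : nat) (alpha : R) (O : set 'rV[R]_n)
    (phi : 'rV[R]_n -> R[i]) :=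
  [set q | exists x y, [/\ closure O x, closure O y, x <> y &
      q = cnorm (phi x - phi y) / powR (edist x y) alpha]].

Definition continuous_on_closure (n : nat) (O : set 'rV[R]_n)
    (phi : 'rV[R]_n -> R[i]) : Prop :=
  forall x, closure O x -> forall e : R, 0 < e -> exists2 d : R, 0 < d &
    forall y, closure O y -> edist x y < d -> cnorm (phi y - phi x) < e.

Definition in_holder (n : nat) (alpha : R) (O : set 'rV[R]_n)
    (phi : 'rV[R]_n -> R[i]) : Prop :=
  [/\ continuous_on_closure O phi,
      has_ubound (holder_sup O phi) & has_ubound (holder_quot alpha O phi)].

Definition holder_norm (n : nat) (alpha : R) (O : set 'rV[R]_n)
    (phi : 'rV[R]_n -> R[i]) : R :=
  sup (holder_sup O phi) + sup (holder_quot alpha O phi).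

Definition sup_boundary (n : nat) (O : set 'rV[R]_n) (phi : 'rV[R]_n -> R[i]) : R :=
  sup [set cnorm (phi x) | x in boundary O].

(* Lebesgue integral over R^n, as iterated one-dimensional Lebesgue integrals *)
Fixpoint iint (n : nat) : ('rV[R]_n -> R) -> R :=
  match n return ('rV[R]_n -> R) -> R with
  | 0 => fun g => g 0
  | m.+1 => fun g => Rintegral lebesgue_measure setT
              (fun t : R => iint (fun x : 'rV[R]_m => g (row_mx (t%:M) x)))
  end.

Definition cint (n : nat) (f : 'rV[R]_n -> R[i]) : R[i] :=
  Complex (iint (fun y => complex.Re (f y))) (iint (fun y => complex.Im (f y))).

Definition expi (t : R) : R[i] := Complex (cos t) (sin t).

Definition Cnk (n : nat) (k : R) : R[i] :=
  (Complex 0 (-1)) * ((Num.sqrt (8 * pi))^-1)%:C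
  * (powR (k / (2 * pi)) ((n%:R - 2) / 2))%:C
  * expi (- ((n%:R - 1) * pi / 4)).

Definition farfield (n : nat) (k : R) (O : set 'rV[R]_n)
    (phi : 'rV[R]_n -> R[i]) (xh : 'rV[R]_n) : R[i] :=
  Cnk n k * cint (fun y => expi (- (k * dotv xh y)) * ((\1_O y : R)%:C * phi y)).

Definition radiates_nonzero (n : nat) (k : R) (O : set 'rV[R]_n)
    (phi : 'rV[R]_n -> R[i]) : Prop :=
  exists xh : 'rV[R]_n, enorm xh = 1 /\ farfield k O phi xh <> 0.

End Defs.

(* Main.v *)
Require Import Defs.
From HB Require Import structures.
From mathcomp Require Import all_boot all_order all_algebra.
From mathcomp Require Import all_classical all_reals all_analysis.
From mathcomp Require Import complex.
From mathcomp Require Import measurable_realfun.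
From mathcomp Require Import ring lra.
Import Order.TTheory GRing.Theory Num.Theory.
Import numFieldNormedType.Exports.
Local Open Scope classical_set_scope.
Local Open Scope ring_scope.

Lemma le_int_ge0 d (T : measurableType d) (R : realType) (mu : {measure set T -> \bar R})
  (f g : T -> \bar R) : (forall x, (0 <= f x)%E) -> (forall x, (f x <= g x)%E) ->
  (\int[mu]_(x in setT) f x <= \int[mu]_(x in setT) g x)%E.
Proof.
move=> f0 fg; rewrite !ge0_integralTE //; last by move=> x; exact: le_trans (f0 x) (fg x).
apply: ereal_sup_le => _ [h hf <-]; exists h => //= x; exact: le_trans (hf x) (fg x).
Qed.

Lemma int_cst_indic (R : realType) (M : R) (i : interval R) : 0 <= M ->
  (\int[@lebesgue_measure R]_(x in setT) (M * \1_[set` i] x)%:E =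
   M%:E * lebesgue_measure [set` i])%E.
Proof.
move=> M0.
rewrite (_ : (fun x => (M * \1_[set` i] x)%:E) = (fun x => M%:E * (\1_[set` i] x)%:E)%E); last by apply/funext => x; rewrite EFinM.
rewrite ge0_integralZl_EFin //. 
- congr (_ * _)%E. rewrite integral_indic. rewrite setIT //. exact: measurableT. exact: measurable_itv.
- apply/measurable_EFinP. apply: measurable_indic. exact: measurable_itv.
Qed.


Lemma int1_bounds (R : realType) (f : R -> R) (M B c a b : R) :
  (forall t, 0 <= f t <= M) -> (forall t, f t != 0 -> `|t| <= B) -> 0 <= B ->
  a <= b -> 0 <= c -> (forall t, a < t < b -> c <= f t) ->
  c * (b - a) <= Rintegral lebesgue_measure setT f <= M * (2 * B).
Proof.
move=> fM fB B0 ab c0 fc.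
have M0 : 0 <= M by case/andP: (fM 0) => h1 h2; exact: le_trans h1 h2.
have up : (\int[@lebesgue_measure R]_(x in setT) (f x)%:E <= (M * (2 * B))%:E)%E.
  apply: (@le_trans _ _ (\int[@lebesgue_measure R]_(x in setT) (M * \1_[set` `[-B, B]] x)%:E)%E).
    apply: le_int_ge0 => x; first by rewrite lee_fin; case/andP: (fM x).
    rewrite lee_fin /indic; case: (boolP (f x == 0)) => [/eqP->|/fB fx].
      by rewrite mulr_ge0.
    have -> : x \in [set` `[-B, B]] by rewrite inE /= in_itv /= -ler_norml.
    by rewrite mulr1; case/andP: (fM x).
  rewrite int_cst_indic // lebesgue_measure_itv /=.
  case: ifP => _; rewrite -EFinM lee_fin.
    by rewrite opprK -mulr2n mulr_natl ?mulr2n.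
  by rewrite mulr0 mulr_ge0 // mulr_ge0.
have lo : ((c * (b - a))%:E <= \int[@lebesgue_measure R]_(x in setT) (f x)%:E)%E.
  apply: (@le_trans _ _ (\int[@lebesgue_measure R]_(x in setT) (c * \1_[set` `]a, b[] x)%:E)%E).
    rewrite int_cst_indic // lebesgue_measure_itv /=.
    case: ifP => h; rewrite -EFinM lee_fin //.
    have -> : b = a by apply/eqP; rewrite eq_le ab /= leNgt -lte_fin h.
    by rewrite subrr !mulr0.
  apply: le_int_ge0 => x; first by rewrite lee_fin /indic; case: (_ \in _); rewrite ?mulr1 ?mulr0.
  rewrite lee_fin /indic; case: (boolP (x \in _)) => [|_].
    by rewrite inE /= in_itv /= mulr1 => /fc.
  by rewrite mulr0; case/andP: (fM x).
have fin : (\int[@lebesgue_measure R]_(x in setT) (f x)%:E)%E \is a fin_num.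
  rewrite ge0_fin_numE; first exact: le_lt_trans up (ltey _).
  apply: integral_ge0 => x _; rewrite lee_fin; by case/andP: (fM x).
rewrite /Rintegral; move: fin up lo.
case: (\int[_]_(_ in _) _)%E => // r _; rewrite !lee_fin /= => -> ->; done.
Qed.

Lemma iint_bounds (R : realType) (n : nat) : forall (g : 'rV[R]_n -> R) (M B c delta : R) (q : 'rV[R]_n),
  (forall y, 0 <= g y <= M) -> (forall y : 'rV[R]_n, g y != 0 -> forall i, `|y 0 i| <= B) -> 0 <= B ->
  0 < delta -> 0 <= c ->
  (forall y : 'rV[R]_n, (forall i, `|y 0 i - q 0 i| < delta) -> c <= g y) ->
  c * delta ^+ n <= iint g <= M * (2 * B) ^+ n.
Proof.
elim: n => [|m IH] g M B c delta q gM gB B0 d0 c0 gc.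
  rewrite /= !expr0 !mulr1; apply/andP; split; last by case/andP: (gM 0).
  by apply: gc => -[].
pose h t := fun x : 'rV[R]_m => g (row_mx t%:M x).
pose q' := \row_(j < m) q 0 (rshift 1 j).
pose q0 := q 0 (lshift m (0 : 'I_1)).
have M0 : 0 <= M by case/andP: (gM 0) => h1 h2; exact: le_trans h1 h2.
have hb : forall t, 0 <= iint (h t) <= M * (2 * B) ^+ m.
  move=> t; have := IH (h t) M B 0 1 0 (fun y => gM _) _ B0 ltr01 (lexx 0).
  rewrite mul0r; apply.
  - move=> y hy i; have := gB _ hy (rshift 1 i). by rewrite (row_mxEr (t%:M : 'rV[R]_1) y).
  - by move=> y _; case/andP: (gM (row_mx t%:M y)).
have /andP[H1 H2] : c * delta ^+ m * ((q0 + delta) - (q0 - delta)) <= iint g <= M * (2 * B) ^+ m * (2 * B).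
  apply: (@int1_bounds R (fun t => iint (h t)) (M * (2 * B) ^+ m) B (c * delta ^+ m)
    (q0 - delta) (q0 + delta) hb).
- move=> t; apply: contraNT; rewrite -ltNge => tB.
  have hz : forall y : 'rV[R]_m, 0 <= h t y <= 0.
    move=> y; case/andP: (gM (row_mx t%:M y)) => g0 _; rewrite /h g0 /=.
    rewrite le_eqVlt; apply/orP; left; apply/eqP; apply: contraTeq tB => hy.
    rewrite -leNgt; have := gB _ hy (lshift m (0 : 'I_1)).
    by rewrite (row_mxEl (t%:M : 'rV[R]_1) y) mxE eqxx mulr1n.
  have hs : forall y : 'rV[R]_m, h t y != 0 -> forall i, `|y 0 i| <= B.
    move=> y hy; exfalso; move: hy; case/andP: (hz y) => h1 h2.
    by rewrite (_ : h t y = 0) ?eqxx //; apply/le_anti; rewrite h1 h2.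
  have := IH (h t) 0 B 0 1 0 hz hs B0 ltr01 (lexx 0) (fun y _ => (proj1 (andP (hz y)))).
  by rewrite !mul0r => /andP[h1 h2]; apply/eqP/le_anti; rewrite h1 h2.
- exact: B0.
- by rewrite lerD2l -subr_ge0 opprK addrC -mulr2n mulrn_wge0 // ltW.
- by apply: mulr_ge0 => //; apply: exprn_ge0; exact: ltW.
- move=> t /andP[t1 t2].
  have hs : forall y : 'rV[R]_m, h t y != 0 -> forall i, `|y 0 i| <= B.
    by move=> y hy i; have := gB _ hy (rshift 1 i); rewrite (row_mxEr (t%:M : 'rV[R]_1) y).
  have hc : forall y : 'rV[R]_m, (forall i, `|y 0 i - q' 0 i| < delta) -> c <= h t y.
    move=> y yq; apply: gc => i; have -> : i = unsplit (fintype.split (i : 'I_(1 + m))) by rewrite splitK.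
    case: (fintype.split _) => j /=.
    * rewrite (row_mxEl (t%:M : 'rV[R]_1) y) (ord1 j) mxE eqxx mulr1n.
      rewrite -/q0 ltr_norml; lra.
    * by rewrite (row_mxEr (t%:M : 'rV[R]_1) y); have := yq j; rewrite mxE.
  have := IH (h t) M B c delta q' (fun y => gM _) hs B0 d0 c0 hc.
  by case/andP.
- apply/andP; split.
    apply: le_trans H1.
    have x0 : 0 <= c * (delta * delta ^+ m).
      by apply: mulr_ge0 => //; apply: mulr_ge0; [exact: ltW| apply: exprn_ge0; exact: ltW].
    rewrite exprS (_ : c * delta ^+ m * (q0 + delta - (q0 - delta)) = 2 * (c * (delta * delta ^+ m))); last by ring.
    by rewrite ler_peMl // ler1n.
  apply: le_trans H2 _.
  by rewrite exprS (_ : M * (2 * B * (2 * B) ^+ m) = M * (2 * B) ^+ m * (2 * B)) //; ring.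
Qed.


Set Implicit Arguments. Unset Strict Implicit.

Lemma RintN d (T : measurableType d) (R : realType) (mu : {measure set T -> \bar R}) D (f : T -> R) :
  Rintegral mu D (fun x => - f x) = - Rintegral mu D f.
Proof.
rewrite /Rintegral.
rewrite (integralE _ _ (fun x => (- f x)%:E)) [in RHS]integralE.
have e1 : (fun x => (- f x)%:E)^\+%E = (fun x => (f x)%:E)^\-%E.
  by rewrite -funeposN.
have e2 : (fun x => (- f x)%:E)^\-%E = (fun x => (f x)%:E)^\+%E.
  by rewrite -funenegN.
rewrite e1 e2.
have A0 := @integral_ge0 _ _ _ mu D ((fun x => (f x)%:E)^\+)%E (fun x _ => funepos_ge0 _ x).
have B0 := @integral_ge0 _ _ _ mu D ((fun x => (f x)%:E)^\-)%E (fun x _ => funeneg_ge0 _ x).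
move: A0 B0.
case: (\int[_]_(x in _) _ x)%E => [a| |]; case: (\int[_]_(x in _) _ x)%E => [b| |] //= _ _.
- by rewrite opprB.
- by rewrite oppr0.
- by rewrite oppr0.
- by rewrite oppr0.
Qed.
Lemma RintN' (R : realType) (f : R -> R) :
  Rintegral lebesgue_measure setT (fun x => - f x) = - Rintegral lebesgue_measure setT f.
Proof. exact: RintN. Qed.

Section S5.
Variable R : realType.
Variable n : nat.
Lemma ballmx (x y : 'rV[R]_n) e : ball x e y -> forall i, `|x 0 i - y 0 i| < e.
Proof. move=> [_ h] i; have := h 0 i. rewrite /ball /=. done. Qed.
Lemma mxball (x y : 'rV[R]_n) e : 0 < e -> (forall i, `|x 0 i - y 0 i| < e) -> ball x e y.
Proof. move=> e0 h; split => // i j; rewrite (ord1 i); exact: h. Qed.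
Lemma open_box (O : set 'rV[R]_n) y0 : open O -> O y0 ->
  exists2 d, 0 < d & forall y : 'rV[R]_n, (forall i, `|y 0 i - y0 0 i| < d) -> O y.
Proof.
move=> oO Oy; have : nbhs y0 O by apply: open_nbhs_nbhs; split.
case/nbhs_ballP => e e0 eO; exists e => // y hy; apply: eO; apply: mxball => // i.
by rewrite distrC.
Qed.
Lemma closure_near (O : set 'rV[R]_n) p e : closure O p -> 0 < e ->
  exists y, O y /\ forall i, `|p 0 i - y 0 i| < e.
Proof.
move=> cp e0; have [y [Oy yb]] := cp _ (nbhsx_ballx p e e0).
by exists y; split => //; apply: ballmx.
Qed.
End S5.

Section S6.
Variable R : realType.
Variable n : nat.
Implicit Types x y : 'rV[R]_n.

Lemma dotv_ge0 x : 0 <= dotv x x.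
Proof. by apply: sumr_ge0 => i _; rewrite -expr2 sqr_ge0. Qed.
Lemma dotv_sq x : dotv x x = enorm x ^+ 2.
Proof. by rewrite /enorm sqr_sqrtr // dotv_ge0. Qed.
Lemma enorm_ge0 x : 0 <= enorm x.
Proof. exact: sqrtr_ge0. Qed.

Lemma coord_le x i : `|x 0 i| <= enorm x.
Proof.
rewrite -sqrtr_sqr /enorm ler_sqrt ?dotv_ge0 // /dotv (bigD1 i) //= expr2 lerDl.
by apply: sumr_ge0 => j _; rewrite -expr2 sqr_ge0.
Qed.

Lemma coord_le_edist x y i : `|x 0 i - y 0 i| <= Defs.edist x y.
Proof. by have := coord_le (x - y)%R i; rewrite !mxE. Qed.

Lemma enorm_eq0 x : enorm x = 0 -> x = 0.
Proof.
move=> /eqP; rewrite sqrtr_eq0 => h.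
have h0 : dotv x x = 0 by apply/le_anti; rewrite h dotv_ge0.
have := h0; rewrite /dotv => /eqP; rewrite psumr_eq0; last first.
  by move=> i _; rewrite -expr2 sqr_ge0.
move=> /allP hall; apply/matrixP => i j; rewrite (ord1 i) !mxE.
have := hall j (mem_index_enum j); rewrite /= mulf_eq0 orbb => /eqP ->; done.
Qed.

Lemma edist_gt0 x y : x <> y -> 0 < Defs.edist x y.
Proof.
move=> xy; rewrite lt_def enorm_ge0 andbT; apply/eqP => /enorm_eq0 /eqP.
by rewrite subr_eq0 => /eqP.
Qed.

Lemma enorm_box x e : (forall i, `|x 0 i| <= e) -> dotv x x <= n%:R * e ^+ 2.
Proof.
move=> h; rewrite /dotv.
apply: (@le_trans _ _ (\sum_(i < n) e ^+ 2)).
  apply: ler_sum => i _; have e0 : 0 <= e := le_trans (normr_ge0 _) (h i).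
  by rewrite -expr2 -real_normK ?num_real // lerXn2r ?nnegrE ?e0.
by rewrite sumr_const card_ord mulr_natl.
Qed.

Lemma edist_bnd x y Mb : enorm x <= Mb -> enorm y <= Mb -> Defs.edist x y <= 2 * Mb.
Proof.
move=> hx hy; have M0 : 0 <= Mb := le_trans (enorm_ge0 x) hx.
rewrite /Defs.edist /enorm -(ger0_norm (_ : 0 <= 2 * Mb)); last by rewrite mulr_ge0.
rewrite -sqrtr_sqr ler_sqrt ?sqr_ge0 //.
apply: (@le_trans _ _ (2 * dotv x x + 2 * dotv y y)).
  rewrite /dotv !mulr_sumr -big_split /=; apply: ler_sum => i _; rewrite !mxE.
  by rewrite -!expr2 -subr_ge0 (_ : _ - _ = (x 0 i + y 0 i) ^+ 2); [exact: sqr_ge0|ring].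
rewrite !dotv_sq (_ : (2 * Mb) ^+ 2 = 2 * Mb ^+ 2 + 2 * Mb ^+ 2); last by ring.
by rewrite lerD // ler_pM2l // lerXn2r // nnegrE ?enorm_ge0.
Qed.
End S6.

Section C.
Local Open Scope complex_scope.
Variable R : realType.
Implicit Types z w : R[i].
Lemma cnorm_ge0 z : 0 <= cnorm z. Proof. exact: sqrtr_ge0. Qed.
Lemma cnorm_Re z : `|complex.Re z| <= cnorm z.
Proof. by rewrite -sqrtr_sqr /cnorm ler_sqrt ?addr_ge0 ?sqr_ge0 // lerDl sqr_ge0. Qed.
Lemma cnorm_Im z : `|complex.Im z| <= cnorm z.
Proof. by rewrite -sqrtr_sqr /cnorm ler_sqrt ?addr_ge0 ?sqr_ge0 // lerDr sqr_ge0. Qed.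
Lemma cnorm_sq z : cnorm z ^+ 2 = complex.Re z ^+ 2 + complex.Im z ^+ 2.
Proof. by rewrite /cnorm sqr_sqrtr // addr_ge0 ?sqr_ge0. Qed.
Lemma cnorm_normc z : cnorm z = ComplexField.Normc.normc z.
Proof. by case: z. Qed.
Lemma cnorm_tri z w : cnorm (z + w) <= cnorm z + cnorm w.
Proof.
have := ComplexField.lec_normD z w; rewrite /ComplexField.lec => /andP[_].
by rewrite !cnorm_normc.
Qed.
Lemma cnormB z w : cnorm (z - w) = cnorm (w - z).
Proof. by case: z => a b; case: w => c e; rewrite /cnorm /=; congr Num.sqrt; ring. Qed.
Lemma ReB z w : complex.Re (z - w) = complex.Re z - complex.Re w.
Proof. by case: z; case: w. Qed.
Lemma ImB z w : complex.Im (z - w) = complex.Im z - complex.Im w.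
Proof. by case: z; case: w. Qed.
Lemma ReF t z : complex.Re (expi t * ((1 : R)%:C * z)) = cos t * complex.Re z - sin t * complex.Im z.
Proof. by case: z => a b /=; ring. Qed.
Lemma ImF t z : complex.Im (expi t * ((1 : R)%:C * z)) = cos t * complex.Im z + sin t * complex.Re z.
Proof. by case: z => a b /=; ring. Qed.
Lemma ReF0 t z : complex.Re (expi t * ((0 : R)%:C * z)) = 0.
Proof. by case: z => a b /=; ring. Qed.
Lemma ImF0 t z : complex.Im (expi t * ((0 : R)%:C * z)) = 0.
Proof. by case: z => a b /=; ring. Qed.
Lemma expi_neq0 (t : R) : expi t != 0.
Proof.
apply/eqP => h; have : cos t = 0 /\ sin t = 0 by case: h.
by case=> c s; have := cos2Dsin2 t; rewrite c s expr0n /= addr0 => /eqP; rewrite eq_sym oner_eq0.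
Qed.
Lemma cos_lip (a b : R) : `|cos a - cos b| <= `|a - b|.
Proof.
wlog ab : a b / a <= b.
  move=> H; case: (leP a b) => h; first exact: H.
  by rewrite distrC (distrC a); apply: H; exact: ltW.
have [c _ e] := @MVT_segment R cos (fun x => - sin x) a b ab (fun x _ => is_derive_cos x)
  (continuous_subspaceT (fun x => @continuous_cos R x)).
by rewrite distrC e (distrC a) normrM normrN ler_piMl ?sin_max.
Qed.
Lemma sin_lip (a b : R) : `|sin a - sin b| <= `|a - b|.
Proof.
wlog ab : a b / a <= b.
  move=> H; case: (leP a b) => h; first exact: H.
  by rewrite distrC (distrC a); apply: H; exact: ltW.
have [c _ e] := @MVT_segment R sin cos a b ab (fun x _ => is_derive_sin x)
  (continuous_subspaceT (fun x => @continuous_sin R x)).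
by rewrite distrC e (distrC a) normrM ler_piMl ?cos_max.
Qed.
End C.

Lemma iintN (R : realType) (n : nat) : forall (g : 'rV[R]_n -> R), iint (fun y => - g y) = - iint g.
Proof.
elim: n => [//|m IH] g /=.
rewrite (_ : (fun t => iint (fun x => - g (row_mx t%:M x))) = (fun t => - iint (fun x => g (row_mx t%:M x)))).
  exact: RintN.
by apply/funext => t; rewrite IH.
Qed.

Section Main.
Variable R : realType.
Variable n : nat.

Lemma closure_edist (O : set 'rV[R]_n) p dl : closure O p -> 0 < dl ->
  exists y, O y /\ Defs.edist p y < dl.
Proof.
move=> cp d0; pose m : R := n%:R + 1.
have m1 : 1 <= m by rewrite lerDr.
have m0 : 0 < m by exact: lt_le_trans ltr01 m1.
pose e := dl / 2 / m.
have e0 : 0 < e by rewrite divr_gt0 // divr_gt0.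
have [y [Oy hy]] := closure_near cp e0.
exists y; split => //.
have hb : dotv (p - y)%R (p - y)%R <= n%:R * e ^+ 2.
  by apply: enorm_box => i; rewrite !mxE; exact: ltW (hy i).
have : dotv (p - y)%R (p - y)%R <= (dl / 2) ^+ 2.
  apply: le_trans hb _.
  have -> : (dl / 2) ^+ 2 = m ^+ 2 * e ^+ 2 by rewrite /e; field; rewrite lt0r_neq0.
  apply: ler_wpM2r; first exact: sqr_ge0.
  apply: (@le_trans _ _ m); first by rewrite lerDl.
  by rewrite expr2 ler_peMl // ltW.
move=> h; apply: (@le_lt_trans _ _ (dl / 2)).
  rewrite /Defs.edist /enorm -(ger0_norm (_ : 0 <= dl / 2)); last by rewrite divr_ge0 // ltW.
  by rewrite -sqrtr_sqr ler_sqrt // sqr_ge0.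
by lra.
Qed.

Lemma rot_err (c s c0 s0 u v u0 v0 L N E : R) :
  `|c - c0| <= L -> `|s - s0| <= L -> `|c0| <= 1 -> `|s0| <= 1 ->
  `|u| <= N -> `|v| <= N -> `|u - u0| <= E -> `|v - v0| <= E ->
  `|(c * u - s * v) - (c0 * u0 - s0 * v0)| <= 2 * (L * N) + 2 * E /\
  `|(c * v + s * u) - (c0 * v0 + s0 * u0)| <= 2 * (L * N) + 2 * E.
Proof.
move=> hc hs hc0 hs0 hu hv huu hvv.
have h1 : `|(c - c0) * u| <= L * N by rewrite normrM ler_pM.
have h2 : `|c0 * (u - u0)| <= E by rewrite normrM -[E]mul1r ler_pM.
have h3 : `|(s - s0) * v| <= L * N by rewrite normrM ler_pM.
have h4 : `|s0 * (v - v0)| <= E by rewrite normrM -[E]mul1r ler_pM.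
have h5 : `|(c - c0) * v| <= L * N by rewrite normrM ler_pM.
have h6 : `|c0 * (v - v0)| <= E by rewrite normrM -[E]mul1r ler_pM.
have h7 : `|(s - s0) * u| <= L * N by rewrite normrM ler_pM.
have h8 : `|s0 * (u - u0)| <= E by rewrite normrM -[E]mul1r ler_pM.
split.
  have -> : (c * u - s * v) - (c0 * u0 - s0 * v0) =
    ((c - c0) * u + c0 * (u - u0)) - ((s - s0) * v + s0 * (v - v0)) by ring.
  apply: le_trans (ler_normB _ _) _.
  apply: le_trans (lerD (ler_normD _ _) (ler_normD _ _)) _; lra.
have -> : (c * v + s * u) - (c0 * v0 + s0 * u0) =
  ((c - c0) * v + c0 * (v - v0)) + ((s - s0) * u + s0 * (u - u0)) by ring.
apply: le_trans (ler_normD _ _) _.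
apply: le_trans (lerD (ler_normD _ _) (ler_normD _ _)) _; lra.
Qed.

Lemma big_comp (a b s : R) : 0 < s -> s ^+ 2 / 4 <= a ^+ 2 + b ^+ 2 ->
  s / 3 <= `|a| \/ s / 3 <= `|b|.
Proof.
move=> s0 h; case: (leP (s / 3) `|a|) => ha; first by left.
case: (leP (s / 3) `|b|) => hb; first by right.
exfalso.
have s3 : 0 <= s / 3 by rewrite divr_ge0 // ltW.
have ha2 : a ^+ 2 <= (s / 3) ^+ 2.
  by rewrite -(real_normK (num_real a)) lerXn2r ?nnegrE ?normr_ge0 // ltW.
have hb2 : b ^+ 2 <= (s / 3) ^+ 2.
  by rewrite -(real_normK (num_real b)) lerXn2r ?nnegrE ?normr_ge0 // ltW.
have : s ^+ 2 / 4 <= 2 * (s / 3) ^+ 2 by apply: le_trans h _; lra.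
have s2 : 0 < s ^+ 2 by rewrite exprn_gt0.
rewrite (_ : 2 * (s / 3) ^+ 2 = s ^+ 2 * (2 / 9)); last by field.
rewrite -subr_ge0 (_ : _ - _ = - (s ^+ 2 * (1 / 36))); last by field.
by rewrite oppr_ge0 leNgt mulr_gt0 // divr_gt0.
Qed.

Lemma pos_iint (O : set 'rV[R]_n) (g : 'rV[R]_n -> R) Mb e Mx y0 d0 :
  (forall y, ~ O y -> g y = 0) -> (forall y, O y -> e <= g y <= Mx) ->
  (forall y, O y -> enorm y <= Mb) -> 0 < e -> 0 < d0 -> O y0 ->
  (forall y : 'rV[R]_n, (forall i, `|y 0 i - y0 0 i| < d0) -> O y) -> 0 < iint g.
Proof.
move=> gout gin hM e0 d0p Oy0 hbox.
have Mx0 : 0 <= Mx by case/andP: (gin _ Oy0) => h1 h2; exact: le_trans (ltW e0) (le_trans h1 h2).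
have Mb0 : 0 <= Mb := le_trans (enorm_ge0 _) (hM _ Oy0).
have := @iint_bounds R n g Mx Mb e d0 y0.
case/(_ _ _ _ _ _ _)/andP => //.
- move=> y; case: (pselect (O y)) => Oy; last by rewrite gout // lexx.
  by case/andP: (gin _ Oy) => h1 ->; rewrite (le_trans (ltW e0) h1).
- move=> y gy i; case: (pselect (O y)) => Oy; last by move: gy; rewrite gout // eqxx.
  exact: le_trans (coord_le _ _) (hM _ Oy).
- exact: ltW.
- by move=> y /hbox /gin /andP[].
- move=> h _; apply: lt_le_trans h; apply: mulr_gt0 => //; exact: exprn_gt0.
Qed.

End Main.

Section CC.
Local Open Scope complex_scope.
Lemma Cnk_neq0 (R : realType) (n : nat) (k : R) : 0 < k -> Cnk n k != 0.
Proof.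
move=> k0; rewrite /Cnk !mulf_neq0 //.
- by rewrite eq_complex /= negb_and oppr_eq0 oner_eq0 orbT.
- rewrite eq_complex /= eqxx andbT invr_eq0 sqrtr_eq0 -ltNge mulr_gt0 //; exact: pi_gt0.
- rewrite eq_complex /= eqxx andbT gt_eqF // powR_gt0 // divr_gt0 // mulr_gt0 //; exact: pi_gt0.
- exact: expi_neq0.
Qed.
Lemma cint_neq0 (R : realType) (n : nat) (f : 'rV[R]_n -> R[i]) :
  iint (fun y => complex.Re (f y)) != 0 \/ iint (fun y => complex.Im (f y)) != 0 -> cint f != 0.
Proof. by move=> h; rewrite /cint eq_complex /= negb_and; apply/orP. Qed.
Lemma ReIm_in (R : realType) (n : nat) (O : set 'rV[R]_n) (phi : 'rV[R]_n -> R[i]) t y : O y ->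
  complex.Re (expi t * ((\1_O y : R)%:C * phi y)) = cos t * complex.Re (phi y) - sin t * complex.Im (phi y) /\
  complex.Im (expi t * ((\1_O y : R)%:C * phi y)) = cos t * complex.Im (phi y) + sin t * complex.Re (phi y).
Proof. by move=> Oy; rewrite indicE (mem_set Oy) /= mulr1n ReF ImF. Qed.
Lemma ReIm_out (R : realType) (n : nat) (O : set 'rV[R]_n) (phi : 'rV[R]_n -> R[i]) t y : ~ O y ->
  complex.Re (expi t * ((\1_O y : R)%:C * phi y)) = 0 /\
  complex.Im (expi t * ((\1_O y : R)%:C * phi y)) = 0.
Proof. by move=> Oy; rewrite indicE (memNset Oy) /= mulr0n ReF0 ImF0. Qed.
End CC.

Unset Implicit Arguments. Set Strict Implicit.

Theorem theorem2p1 (R : realType) (n : nat) (Rm k : R) :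
  (2 <= n)%N -> 0 < Rm -> 0 < k ->
  exists C : R, 0 < C /\
    forall (alpha : R) (O : set 'rV[R]_n),
      0 <= alpha <= 1 ->
      lipschitz_domain O -> diam O <= Rm -> connected (~` O) ->
      forall phi : 'rV[R]_n -> R[i],
        in_holder alpha O phi ->
        sup_boundary O phi / holder_norm alpha O phi >= C * powR (diam O) alpha ->
        radiates_nonzero k O phi.
Proof.
move=> n2 Rm0 k0.
have C0 : 0 < 12 * (k + 1) by apply: mulr_gt0 => //; lra.
exists (12 * (k + 1)); split => //.
set C := 12 * (k + 1).
have C1 : 1 < C by rewrite /C; lra.
move=> alpha O /andP[a0 a1] [oO cO [y00 Oy00] [Mb hMb] _] _ _ phi [hcont ubS ubQ] hyp.
have n0 : (0 < n)%N by apply: leq_trans n2.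
pose i0 : 'I_n := Ordinal n0.
set d := diam O in hyp *.
set P := powR d alpha in hyp *.
set s := sup_boundary O phi in hyp *.
set N := holder_norm alpha O phi in hyp *.
set S0 := sup (holder_sup O phi).
set Q := sup (holder_quot alpha O phi).
have NE : N = S0 + Q by [].
have clO : forall x, O x -> closure O x by move=> x; exact: subset_closure.
have hed : forall x y, O x -> O y -> Defs.edist x y <= d.
  move=> x y Ox Oy; apply: ub_le_sup; last by exists x, y.
  exists (2 * Mb) => _ [a [b [Oa [Ob ->]]]]; exact: edist_bnd (hMb _ Oa) (hMb _ Ob).
have [dl1 dl1p hbox1] := open_box oO Oy00.
pose y1 := y00 + (dl1 / 2) *: delta_mx 0 i0.
have Oy1 : O y1.
  apply: hbox1 => i; rewrite !mxE.
  rewrite (_ : _ + _ - _ = dl1 / 2 * ((0 == 0 :> 'I_1) && (i == i0))%:R); last by ring.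
  rewrite normrM ger0_norm ?divr_ge0 ?ltW //.
  case: (_ && _) => /=; rewrite ?mulr1n ?mulr0n ?normr1 ?normr0 ?mulr1 ?mulr0; lra.
have y01 : y00 <> y1.
  move=> /matrixP /(_ 0 i0); rewrite !mxE !eqxx /= ?mulr1n ?mulr1 => h; lra.
have d0 : 0 < d := lt_le_trans (edist_gt0 y01) (hed _ _ Oy00 Oy1).
have P0 : 0 < P by apply: powR_gt0.
have S0ge : forall x, closure O x -> cnorm (phi x) <= S0.
  by move=> x cx; apply: (ub_le_sup ubS); exists x.
have S00 : 0 <= S0 := le_trans (cnorm_ge0 _) (S0ge _ (clO _ Oy00)).
have Qq : forall x y, closure O x -> closure O y -> x <> y ->
    cnorm (phi x - phi y) / powR (Defs.edist x y) alpha <= Q.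
  by move=> x y cx cy xy; apply: (ub_le_sup ubQ); exists x, y; split.
have Q0 : 0 <= Q := le_trans (divr_ge0 (cnorm_ge0 _) (powR_ge0 _ _)) (Qq _ _ (clO _ Oy00) (clO _ Oy1) y01).
have N0 : 0 <= N by rewrite NE addr_ge0.
have CP0 : 0 < C * P by rewrite mulr_gt0.
have sN0 : 0 < s / N := lt_le_trans CP0 hyp.
have Npos : 0 < N.
  rewrite lt_def N0 andbT; apply/eqP => N0'; move: sN0; rewrite N0' invr0 mulr0 ltxx.
  done.
have spos : 0 < s by move: sN0; rewrite pmulr_lgt0 // invr_gt0.
have BBne : [set cnorm (phi x) | x in boundary O] !=set0.
  case: (pselect ([set cnorm (phi x) | x in boundary O] !=set0)) => // hne; exfalso.
  have h0 : [set cnorm (phi x) | x in boundary O] = set0.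
    by apply/seteqP; split => // e he; apply: hne; exists e.
  by move: spos; rewrite /s /sup_boundary h0 sup0 ltxx.
have sS0 : s <= S0.
  rewrite /s /sup_boundary; apply: (ge_sup BBne) => _ [x bx <-]; apply: S0ge; by case: bx.
have sN : s <= N by rewrite NE; lra.
have CPN : C * P * N <= s by rewrite -ler_pdivlMr.
have CP1 : C * P <= 1.
  by rewrite -(ler_pM2r Npos) mul1r; exact: le_trans CPN sN.
have alpha0 : 0 < alpha.
  rewrite lt_def a0 andbT; apply/eqP => a0'; move: CP1; rewrite /P a0' powRr0 mulr1; lra.
have d1 : d < 1.
  rewrite ltNge; apply/negP => d1.
  have h1P : 1 <= P by rewrite -(powRr0 d) /P; exact: ler_powR d1 _ _ a0.
  have : C <= C * P by rewrite ler_peMr // ltW.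
  lra.
have dP : d <= P by apply: ger1_powR => //; rewrite d0 ltW.
have PNs : P * N <= s / C by rewrite ler_pdivlMr // mulrC mulrA.
have dNs : d * N <= s / C := le_trans (ler_wpM2r N0 dP) PNs.
have [e [p bp pe] ep] : exists2 e, [set cnorm (phi x) | x in boundary O] e & 3 * s / 4 < e.
  by apply: sup_gt BBne _; change (3 * s / 4 < s); lra.
case: bp => cp _.
have s4 : 0 < s / 4 by lra.
have [dl dlp hdl] := hcont p cp (s / 4) s4.
have [y0 [Oy0 ey0]] := closure_edist cp dlp.
have hy0 := hdl y0 (clO _ Oy0) ey0.
have cy0 : s / 2 <= cnorm (phi y0).
  have := cnorm_tri (phi y0) (phi p - phi y0).
  rewrite addrC subrK cnormB pe; lra.
have [dl0 dl0p hbox] := open_box oO Oy0.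
have hdphi : forall y, O y -> cnorm (phi y - phi y0) <= s / C.
  move=> y Oy; case: (pselect (y = y0)) => [->|yy0].
    rewrite subrr /cnorm /= expr0n /= addr0 sqrtr0; apply: divr_ge0; lra.
  have q := Qq y y0 (clO _ Oy) (clO _ Oy0) yy0.
  have pe0 : 0 < powR (Defs.edist y y0) alpha by apply: powR_gt0; exact: edist_gt0.
  have peP : powR (Defs.edist y y0) alpha <= P.
    by apply: (ge0_ler_powR (ltW alpha0)); rewrite ?nnegrE ?enorm_ge0 ?(ltW d0) ?hed.
  have QN : Q <= N by rewrite NE; lra.
  apply: le_trans (_ : _ <= Q * powR (Defs.edist y y0) alpha) _; first by rewrite -ler_pdivrMr.
  apply: le_trans (ler_wpM2l Q0 peP) _.
  by apply: le_trans (ler_wpM2r (ltW P0) QN) _; rewrite mulrC.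
have hphiN : forall y, O y -> cnorm (phi y) <= N.
  by move=> y Oy; rewrite NE; apply: le_trans (S0ge _ (clO _ Oy)) _; lra.
pose xh : 'rV[R]_n := delta_mx 0 i0.
have dotxh : forall y, dotv xh y = y 0 i0.
  move=> y; rewrite /dotv (bigD1 i0) //= big1 ?addr0.
    by rewrite mxE !eqxx /= mulr1n mul1r.
  by move=> j /negbTE hj; rewrite mxE hj andbF /= mulr0n mul0r.
have enxh : enorm xh = 1 by rewrite /enorm dotxh mxE !eqxx /= mulr1n sqrtr1.
exists xh; split => //.
rewrite /farfield; apply/eqP; rewrite mulf_eq0 negb_or Cnk_neq0 //=.
apply: cint_neq0.
pose th y := - (k * dotv xh y).
have hth : forall y, O y -> `|th y - th y0| <= k * d.
  move=> y Oy; rewrite /th !dotxh (_ : _ - _ = k * (y0 0 i0 - y 0 i0)); last by ring.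
  rewrite normrM gtr0_norm //; apply: ler_wpM2l; first exact: ltW.
  by apply: le_trans (coord_le_edist _ _ _) (hed _ _ Oy0 Oy).
have eC : 2 * (k * (s / C)) + 2 * (s / C) = s / 6.
  by rewrite /C; field; lra.
have kdN : k * d * N <= k * (s / C) by rewrite -mulrA ler_wpM2l // ltW.
set uz := complex.Re (phi y0).
set vz := complex.Im (phi y0).
set az := cos (th y0) * uz - sin (th y0) * vz.
set bz := cos (th y0) * vz + sin (th y0) * uz.
have herr : forall y, O y ->
   `|(cos (th y) * complex.Re (phi y) - sin (th y) * complex.Im (phi y)) - az| <= s / 6 /\
   `|(cos (th y) * complex.Im (phi y) + sin (th y) * complex.Re (phi y)) - bz| <= s / 6.
  move=> y Oy.
  have := @rot_err R (cos (th y)) (sin (th y)) (cos (th y0)) (sin (th y0))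
    (complex.Re (phi y)) (complex.Im (phi y)) uz vz (k * d) N (s / C).
  case.
  - exact: le_trans (cos_lip _ _) (hth _ Oy).
  - exact: le_trans (sin_lip _ _) (hth _ Oy).
  - exact: cos_max.
  - exact: sin_max.
  - exact: le_trans (cnorm_Re _) (hphiN _ Oy).
  - exact: le_trans (cnorm_Im _) (hphiN _ Oy).
  - by rewrite /uz -ReB; apply: le_trans (cnorm_Re _) (hdphi _ Oy).
  - by rewrite /vz -ImB; apply: le_trans (cnorm_Im _) (hdphi _ Oy).
  move=> h1 h2; split; [apply: le_trans h1 _|apply: le_trans h2 _]; lra.
have ab0 : s ^+ 2 / 4 <= az ^+ 2 + bz ^+ 2.
  have -> : az ^+ 2 + bz ^+ 2 = (cos (th y0) ^+ 2 + sin (th y0) ^+ 2) * (uz ^+ 2 + vz ^+ 2).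
    by rewrite /az /bz; ring.
  rewrite cos2Dsin2 mul1r -cnorm_sq.
  have -> : s ^+ 2 / 4 = (s / 2) ^+ 2 by field.
  by rewrite lerXn2r ?nnegrE ?cnorm_ge0 // divr_ge0 // ltW.
have key : forall (G : 'rV[R]_n -> R) (z0 : R), (forall y, ~ O y -> G y = 0) ->
    (forall y, O y -> `|G y - z0| <= s / 6) -> s / 3 <= `|z0| -> iint G != 0.
  move=> G z0 Gout Gin hz.
  have s6 : 0 < s / 6 by lra.
  case: (lerP 0 z0) => z0s.
    rewrite ger0_norm // in hz.
    apply: lt0r_neq0; apply: (pos_iint (Mb := Mb) (e := s / 6) (Mx := z0 + s / 6) Gout _ hMb s6 dl0p Oy0 hbox).
    by move=> y /Gin; rewrite ler_norml => /andP[h1 h2]; apply/andP; split; lra.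
  rewrite ltr0_norm // in hz.
  have : 0 < iint (fun y => - G y).
    apply: (pos_iint (Mb := Mb) (e := s / 6) (Mx := - z0 + s / 6) _ _ hMb s6 dl0p Oy0 hbox).
      by move=> y /Gout ->; rewrite oppr0.
    by move=> y /Gin; rewrite ler_norml => /andP[h1 h2]; apply/andP; split; lra.
  by rewrite iintN oppr_gt0 => /lt_eqF ->.
case: (big_comp spos ab0) => hab; [left|right]; apply: (key _ _ _ _ hab).
- by move=> y /(ReIm_out phi (- (k * dotv xh y))) [-> _].
- by move=> y Oy; have [-> _] := ReIm_in phi (- (k * dotv xh y)) Oy; case: (herr _ Oy).
- by move=> y /(ReIm_out phi (- (k * dotv xh y))) [_ ->].
- by move=> y Oy; have [_ ->] := ReIm_in phi (- (k * dotv xh y)) Oy; case: (herr _ Oy).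
Qed.
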